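(* Suppose there exist vectors $\mathbf{v}_{1},\dots,\mathbf{v}_{N}\in\mathbb{C}^{2N}$ such that, with $\mathbf{u}_{n}=\bm{\Gamma}\mathbf{v}_{n}^{*}$: (a) the $2N$ vectors $\mathbf{v}_{1},\dots,\mathbf{v}_{N},\mathbf{u}_{1},\dots,\mathbf{u}_{N}$ are eigenvectors of $\mathbf{D}$ and are mutually $\mathbf{R}$-orthogonal (any two distinct ones have $\mathbf{R}$-inner product $0$); (b) $\langle\mathbf{v}_{n},\mathbf{v}_{n}\rangle=1$ for each $n$; (c) the eigenvalue $\mu_{n}$ of $\mathbf{D}$ associated with $\mathbf{v}_{n}$ is positive for each $n$. Then there exists a normal mode transformation $\mathbf{T}$ whose numbers $\mu_{1},\dots,\mu_{N}$ are the eigenvalues of $\mathbf{D}$ associated with $\mathbf{v}_{1},\dots,\mathbf{v}_{N}$.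
   Context: Fix an integer $N\ge 1$, real numbers $v$ with $|v|<1$, $L>0$, $L_{\star}\ge 0$, an integer $M\ge 1$ and real coefficients $c_{1}=1,c_{2},\dots,c_{M}$. Let $F(k)=\sum_{i=1}^{M}(-1)^{i-1}c_{i}L_{\star}^{2i-2}k^{2i-1}$ and $k_{n}=n\pi/L$, and assume $F(k_{n})^{2}\neq v^{2}k_{n}^{2}$ for $n=1,\dots,N$. Put $u_{n}=\sqrt{|F(k_{n})^{2}-v^{2}k_{n}^{2}|}/k_{n}>0$, and $\varepsilon_{n}=1$ if $F(k_{n})^{2}-v^{2}k_{n}^{2}>0$, $\varepsilon_{n}=0$ otherwise. Define $N\times N$ matrices $\bm\sigma,\bm\rho,\bm\xi$ by $\sigma_{nn}=0$, $\sigma_{nm}=\dfrac{2iv\sqrt{nm}\,[1-(-1)^{n+m}]}{\pi\sqrt{u_{n}u_{m}}\,(m^{2}-n^{2})}$ for $n\neq m$, $\bm\rho=\mathrm{diag}(n u_{n}\varepsilon_{n})$, $\bm\xi=\mathrm{diag}(-n u_{n}(1-\varepsilon_{n}))$. With $\mathbf{I}$ the $N\times N$ identity, define the $2N\times 2N$ matrices $\bm{\Sigma}=\begin{pmatrix}\mathbf{I}&\mathbf{0}\\ \mathbf{0}&-\mathbf{I}\end{pmatrix}$, $\bm{\Gamma}=\begin{pmatrix}\mathbf{0}&\mathbf{I}\\ \mathbf{I}&\mathbf{0}\end{pmatrix}$, $\mathbf{R}=\bm{\Sigma}-\begin{pmatrix}\bm\sigma&\bm\sigma\\ \bm\sigma&\bm\sigma\end{pmatrix}$,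 $\bm{\Omega}=\begin{pmatrix}\bm\rho&\bm\xi\\ \bm\xi&\bm\rho\end{pmatrix}$. Standing assumption: $\mathbf{R}$ is invertible. Let $\mathbf{D}=\mathbf{R}^{-1}\bm{\Omega}$. Here ${}^{*}$ denotes entrywise complex conjugation, ${}^{\mathrm{H}}$ the conjugate transpose, and the $\mathbf{R}$-inner product is $\langle\mathbf{x},\mathbf{y}\rangle=\mathbf{x}^{\mathrm{H}}\mathbf{R}\mathbf{y}$. A normal mode transformation is a $2N\times2N$ matrix $\mathbf{T}$ such that (i) $\mathbf{T}^{\mathrm{H}}\mathbf{R}\mathbf{T}=\bm{\Sigma}$; (ii) $\mathbf{T}=\bm{\Gamma}\mathbf{T}^{*}\bm{\Gamma}$; (iii) $\mathbf{T}^{-1}\mathbf{D}\mathbf{T}=\mathrm{diag}(\mu_{1},\dots,\mu_{N},-\mu_{1},\dots,-\mu_{N})$ for some real numbers $\mu_{n}>0$, where $\mathbf{T}^{-1}=\bm{\Sigma}\mathbf{T}^{\mathrm{H}}\mathbf{R}$. *)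

(* Defs.v *)
From mathcomp Require Import all_boot all_algebra.
From mathcomp Require Import all_classical all_reals trigo.
From mathcomp Require Export complex.
Set Implicit Arguments. Unset Strict Implicit. Unset Printing Implicit Defensive.
Import GRing.Theory Num.Theory.
Local Open Scope ring_scope.
Local Open Scope complex_scope.

Section Defs.
Variable R : realType.
Variables (v L Ls : R) (M : nat) (c : nat -> R) (N : nat).

(* F(k) = sum_{i=1}^M (-1)^(i-1) c_i Ls^(2i-2) k^(2i-1); c indexed from 1 *)
Definition Fk (k : R) : R :=
  \sum_(i < M) (-1) ^+ i * c i.+1 * Ls ^+ (2 * i) * k ^+ (2 * i + 1).

Definition kn (n : nat) : R := n%:R * pi / L.

Definition disc (n : nat) : R := Fk (kn n) ^+ 2 - v ^+ 2 * kn n ^+ 2.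

Definition un (n : nat) : R := Num.sqrt `|disc n| / kn n.

Definition epsn (n : nat) : R := if 0 < disc n then 1 else 0.

(* N x N matrices, row/column index i : 'I_N stands for n = i+1 *)
Definition sigma_mx : 'M[R[i]]_N :=
  \matrix_(i, j)
    if i == j then 0
    else 'i * ((2 * v * Num.sqrt ((i.+1 * j.+1)%:R) * (1 - (-1) ^+ (i.+1 + j.+1)))
               / (pi * Num.sqrt (un i.+1 * un j.+1)
                     * ((j.+1 ^ 2)%:R - (i.+1 ^ 2)%:R)))%:C.

Definition rho_mx : 'M[R[i]]_N :=
  diag_mx (\row_(i < N) (i.+1%:R * un i.+1 * epsn i.+1)%:C).

Definition xi_mx : 'M[R[i]]_N :=
  diag_mx (\row_(i < N) (- (i.+1%:R * un i.+1 * (1 - epsn i.+1)))%:C).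

Definition Sigma_mx : 'M[R[i]]_(N + N) := block_mx 1%:M 0 0 (- 1%:M).
Definition Gamma_mx : 'M[R[i]]_(N + N) := block_mx 0 1%:M 1%:M 0.
Definition R_mx : 'M[R[i]]_(N + N) :=
  Sigma_mx - block_mx sigma_mx sigma_mx sigma_mx sigma_mx.
Definition Omega_mx : 'M[R[i]]_(N + N) := block_mx rho_mx xi_mx xi_mx rho_mx.
Definition D_mx : 'M[R[i]]_(N + N) := invmx R_mx *m Omega_mx.

End Defs.

Definition cconj (R : realType) (m n : nat) (A : 'M[R[i]]_(m, n)) : 'M[R[i]]_(m, n) :=
  map_mx conjc A.
Definition ctrans (R : realType) (m n : nat) (A : 'M[R[i]]_(m, n)) : 'M[R[i]]_(n, m) :=
  (cconj A)^T.

Definition Rinner (R : realType) (n : nat) (Rm : 'M[R[i]]_n) (x y : 'cV[R[i]]_n) : R[i] :=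
  (ctrans x *m Rm *m y) 0 0.

Definition normal_mode_transformation (R : realType) (N : nat)
    (Rm Dm : 'M[R[i]]_(N + N)) (T : 'M[R[i]]_(N + N)) (mu : 'I_N -> R) : Prop :=
  [/\ ctrans T *m Rm *m T = Sigma_mx R N,
      T = Gamma_mx R N *m cconj T *m Gamma_mx R N,
      (Sigma_mx R N *m ctrans T *m Rm) *m Dm *m T
        = diag_mx (row_mx (\row_(n < N) (mu n)%:C) (\row_(n < N) (- mu n)%:C))
    & forall n, 0 < mu n].

(* Main.v *)
Require Import Defs.
From mathcomp Require Import all_boot all_algebra.
From mathcomp Require Import all_classical all_reals trigo.
From mathcomp Require Import complex.
Import GRing.Theory Num.Theory.
Local Open Scope ring_scope.
Local Open Scope complex_scope.

Section Facts.
Variable R : realType.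
Variables (v L Ls : R) (M : nat) (c : nat -> R) (N : nat).

Lemma conj_sigma : cconj (sigma_mx v L Ls M c N) = - sigma_mx v L Ls M c N.
Proof.
apply/matrixP => i j; rewrite !mxE.
case: eqP => _; first by rewrite conjc0 oppr0.
rewrite rmorphM /= -mulNr; congr (_ * _); apply/eqP; rewrite eq_complex /= ?oppr0 ?eqxx //.
Qed.

Lemma conj_rho : cconj (rho_mx v L Ls M c N) = rho_mx v L Ls M c N.
Proof. by apply/matrixP => i j; rewrite !mxE rmorphMn; congr (_ *+ _); apply/eqP; rewrite eq_complex /= oppr0 !eqxx. Qed.

Lemma conj_xi : cconj (xi_mx v L Ls M c N) = xi_mx v L Ls M c N.
Proof. by apply/matrixP => i j; rewrite !mxE rmorphMn; congr (_ *+ _); apply/eqP; rewrite eq_complex /= oppr0 !eqxx. Qed.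

Lemma conj_Sigma : cconj (Sigma_mx R N) = Sigma_mx R N.
Proof. by rewrite /cconj /Sigma_mx map_block_mx map_mxN map_mx1 !map_mx0. Qed.

Lemma conj_Gamma : cconj (Gamma_mx R N) = Gamma_mx R N.
Proof. by rewrite /cconj /Gamma_mx map_block_mx map_mx1 !map_mx0. Qed.

Lemma conj_Omega : cconj (Omega_mx v L Ls M c N) = Omega_mx v L Ls M c N.
Proof. by rewrite /cconj /Omega_mx map_block_mx -!/(cconj _) conj_rho conj_xi. Qed.

Lemma GG : Gamma_mx R N *m Gamma_mx R N = 1%:M.
Proof.
by rewrite /Gamma_mx mulmx_block !mulmx0 !mul0mx !mulmx1 !addr0 !add0r -scalar_mx_block.
Qed.

Lemma SS : Sigma_mx R N *m Sigma_mx R N = 1%:M.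
Proof.
rewrite /Sigma_mx mulmx_block !mulmx0 !mul0mx !mulmx1 !addr0 !add0r mulmxN mulmx1 opprK.
by rewrite -scalar_mx_block.
Qed.

Lemma GOG : Gamma_mx R N *m Omega_mx v L Ls M c N *m Gamma_mx R N = Omega_mx v L Ls M c N.
Proof.
rewrite /Gamma_mx /Omega_mx !mulmx_block !mulmx0 !mul0mx !mulmx1 !mul1mx !addr0 !add0r.
by [].
Qed.

Lemma GblockG (A B C D : 'M[R[i]]_N) :
  Gamma_mx R N *m block_mx A B C D *m Gamma_mx R N = block_mx D C B A.
Proof.
by rewrite /Gamma_mx !mulmx_block !mulmx0 !mul0mx !mulmx1 !mul1mx !addr0 !add0r.
Qed.

Lemma GRG : Gamma_mx R N *m R_mx v L Ls M c N *m Gamma_mx R N = - cconj (R_mx v L Ls M c N).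
Proof.
rewrite /R_mx /cconj map_mxB -!/(cconj _) conj_Sigma /cconj map_block_mx -!/(cconj _) conj_sigma.
rewrite mulmxBr mulmxBl /Sigma_mx !GblockG !opp_block_mx !opprK !add_block_mx !opp_block_mx !opprD !opprK !oppr0.
by [].
Qed.

Lemma trG : (Gamma_mx R N)^T = Gamma_mx R N.
Proof. by rewrite /Gamma_mx tr_block_mx !trmx1 !trmx0. Qed.

End Facts.

Lemma conjR (R : realType) (x : R) : conjc (x%:C) = x%:C.
Proof. by apply/eqP; rewrite eq_complex /= oppr0 !eqxx. Qed.

Lemma cconjK (R : realType) m n (A : 'M[R[i]]_(m,n)) : cconj (cconj A) = A.
Proof. by apply/matrixP => a b; rewrite !mxE conjcK. Qed.

Lemma cconjM (R : realType) m n p (A : 'M[R[i]]_(m,n)) (B : 'M[R[i]]_(n,p)) :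
  cconj (A *m B) = cconj A *m cconj B.
Proof. exact: map_mxM. Qed.

Lemma inner_entry (R : realType) m n (Rm : 'M[R[i]]_m) (A B : 'M[R[i]]_(m, n)) a b :
  (ctrans A *m Rm *m B) a b = Rinner Rm (col a A) (col b B).
Proof.
rewrite /Rinner !mxE; apply: eq_bigr => j _; rewrite !mxE; congr (_ * _).
by apply: eq_bigr => k _; rewrite !mxE.
Qed.

Lemma colM (T : pzRingType) m n p (A : 'M[T]_(m,n)) (B : 'M[T]_(n,p)) j :
  col j (A *m B) = A *m col j B.
Proof. by rewrite !colE mulmxA. Qed.

Lemma col_ext (T : Type) m n (A B : 'M[T]_(m,n)) : (forall j, col j A = col j B) -> A = B.
Proof.
move=> H; apply/matrixP => a j; move/(_ j)/matrixP/(_ a 0): H; by rewrite !mxE.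
Qed.

Lemma ordLR N (P : 'I_(N+N) -> Prop) :
  (forall x, P (lshift N x)) -> (forall x, P (rshift N x)) -> forall k, P k.
Proof. by move=> Hl Hr k; rewrite -(splitK k); case: (fintype.split k) => x; [exact: Hl | exact: Hr]. Qed.

Theorem lemma3 (R : realType) (N : nat) (v L Ls : R) (M : nat) (c : nat -> R) :
  (0 < N)%N -> `|v| < 1 -> 0 < L -> 0 <= Ls -> (0 < M)%N -> c 1%N = 1 ->
  (forall n : 'I_N, disc v L Ls M c n.+1 != 0) ->
  R_mx v L Ls M c N \in unitmx ->
  forall (w : 'I_N -> 'cV[R[i]]_(N + N)) (mu : 'I_N -> R),
  let Rm := R_mx v L Ls M c N in
  let Dm := D_mx v L Ls M c N in
  let u := fun n => Gamma_mx R N *m cconj (w n) in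
  let W := fun k : 'I_(N + N) =>
             match fintype.split k with inl n => w n | inr n => u n end in
  (forall k, W k != 0 /\ exists lam : R[i], Dm *m W k = lam *: W k) ->
  (forall k l, k != l -> Rinner Rm (W k) (W l) = 0) ->
  (forall n, Rinner Rm (w n) (w n) = 1) ->
  (forall n, Dm *m w n = (mu n)%:C *: w n /\ 0 < mu n) ->
  exists T : 'M[R[i]]_(N + N), normal_mode_transformation Rm Dm T mu.
Proof.
move=> _ _ _ _ _ _ _ unitR w mu Rm Dm u W _ Horth Hnorm Hmu.
pose G := Gamma_mx R N.
pose Om := Omega_mx v L Ls M c N.
have GRG' : G *m Rm *m G = - cconj Rm := @GRG R v L Ls M c N.
have GOG' : G *m Om *m G = Om := @GOG R v L Ls M c N.
have cOm : cconj Om = Om := @conj_Omega R v L Ls M c N.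
have GG' : G *m G = 1%:M := GG R N.
have RD : Rm *m Dm = Om by rewrite /Dm /D_mx mulmxA mulmxV // mul1mx.
have GcR : G *m cconj Rm = - (Rm *m G).
  have := congr1 (mulmx G) GRG'; rewrite !mulmxA GG' mul1mx mulmxN => ->.
  by rewrite opprK.
have OmG : Om *m G = G *m Om.
  by have := congr1 (mulmx G) GOG'; rewrite !mulmxA GG' mul1mx => ->.
have sl x : fintype.split (lshift N x) = inl x := unsplitK (inl _ x).
have sr x : fintype.split (rshift N x) = inr x := unsplitK (inr _ x).
have Wl x : W (lshift N x) = w x by rewrite /W sl.
have Wr x : W (rshift N x) = u x by rewrite /W sr.
have Du n : Dm *m u n = (- mu n)%:C *: u n.
  apply: (can_inj (mulKmx unitR)).
  rewrite mulmxA RD /u -/G -/Rm mulmxA OmG -mulmxA -cOm -cconjM -RD -mulmxA (Hmu n).1.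
  rewrite cconjM /cconj map_mxZ -!/(cconj _) /= oppr0 mulmxA GcR.
  rewrite -scalemxAr mulNmx scalemxAr mulmxA scalerN -scaleNr -(scalemxAr (- mu n)%:C (Rm *m G)); congr (_ *: _).
  by apply/eqP; rewrite eq_complex /= oppr0 !eqxx.
have trG' : G^T = G := trG R N.
have Ruu n : Rinner Rm (u n) (u n) = -1.
  have ctu : ctrans (u n) = (w n)^T *m G.
    by rewrite /ctrans /u -/G cconjM cconjK /G conj_Gamma trmx_mul trG.
  have E : conjc (Rinner Rm (w n) (w n)) = ((w n)^T *m cconj Rm *m cconj (w n)) 0 0.
    rewrite /Rinner.
    have -> : forall X : 'M[R[i]]_1, conjc (X 0 0) = (cconj X) 0 0 by move=> X; rewrite mxE.
    rewrite !cconjM /ctrans /cconj map_trmx.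
    by rewrite -!/(cconj _) cconjK.
  rewrite Hnorm conjc1 in E.
  rewrite /Rinner ctu /u -/G.
  have -> : (w n)^T *m G *m Rm *m (G *m cconj (w n)) = (w n)^T *m (G *m Rm *m G) *m cconj (w n) by rewrite !mulmxA.
  rewrite GRG'.
  by rewrite mulmxN mulNmx mxE E.
pose Tw : 'M[R[i]]_(N + N, N) := \matrix_(a, n) w n a 0.
have colTw n : col n Tw = w n by apply/matrixP => a b; rewrite !mxE (ord1 b).
pose T := row_mx Tw (G *m cconj Tw).
have colT k : col k T = W k.
  elim/ordLR: k => x; first by rewrite colKl colTw Wl.
  by rewrite colKr Wr colM /cconj -map_col -/(cconj _) colTw.
have TRT : ctrans T *m Rm *m T = Sigma_mx R N.
  apply/matrixP => a b; rewrite inner_entry !colT /Sigma_mx.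
  elim/ordLR: a => x; elim/ordLR: b => y.
  - rewrite block_mxEul !Wl mxE; case: (eqVneq x y) => [->|nxy]; first by rewrite Hnorm.
    by rewrite -(Wl x) -(Wl y) Horth ?eq_lshift.
  - by rewrite block_mxEur mxE Horth // eq_lrshift.
  - by rewrite block_mxEdl mxE Horth // eq_rlshift.
  - rewrite block_mxEdr !Wr !mxE; case: (eqVneq x y) => [->|nxy]; first by rewrite Ruu.
    by rewrite -(Wr x) -(Wr y) Horth ?eq_rshift // oppr0.
pose Lam := diag_mx (row_mx (\row_(n < N) (mu n)%:C) (\row_(n < N) (- mu n)%:C)).
have DT : Dm *m T = T *m Lam.
  rewrite /Lam diag_mx_row /T mul_mx_row mul_row_block !mulmx0 addr0 add0r.
  congr row_mx; apply: col_ext => x; rewrite colM mul_mx_diag.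
  - rewrite colTw (Hmu x).1; apply/matrixP => a b; rewrite !mxE (ord1 b) mulrC.
    by rewrite -(colTw x) mxE.
  - have cu : col x (G *m cconj Tw) = u x.
      by rewrite colM /cconj -map_col -/(cconj _) colTw.
    rewrite cu Du; apply/matrixP => a b; rewrite !mxE (ord1 b) mulrC.
    by congr (_ * _); apply: eq_bigr => j _; rewrite /cconj !mxE.
exists T; split.
- exact: TRT.
- rewrite /T /cconj map_row_mx -!/(cconj _) cconjM cconjK /G conj_Gamma -/G mul_mx_row.
  rewrite /G /Gamma_mx mul_row_block !mulmx0 !mulmx1 addr0 add0r -/G.
  by rewrite mulmxA GG' mul1mx.
- have -> : Sigma_mx R N *m ctrans T *m Rm *m Dm *m T = Sigma_mx R N *m (ctrans T *m Rm *m T) *m Lam.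
    by rewrite -[_ *m Dm *m T]mulmxA DT !mulmxA.
  by rewrite TRT SS mul1mx.
- by move=> n; exact: (Hmu n).2.
Qed.
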